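(* Let $n\ge 4$ and let $H$ be obtained from the cycle $C_n$ by attaching a single new pendant vertex (leaf) to each of two vertices of $C_n$ whose distance in $C_n$ is $2k+1$ for some integer $k\ge 0$. Then $\chi_\rho(H)\ge 4$.
   Context: $d(u,v)$ is the shortest-path distance. A $k$-packing coloring of $G$ is a map $c:V(G)\to\{1,\dots,k\}$ such that whenever $u\neq v$ and $c(u)=c(v)=i$, we have $d(u,v)>i$. $\chi_\rho(G)$ is the least $k$ such that $G$ has a $k$-packing coloring. *)

(* Defs.v *)
From mathcomp Require Import all_boot.
Set Implicit Arguments. Unset Strict Implicit. Unset Printing Implicit Defensive.

Fixpoint within (T : finType) (e : rel T) (m : nat) (x y : T) : bool :=
  if m is m'.+1 then within e m' x y || [exists z, within e m' x z && e z y]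
  else x == y.

(* Shortest-path distance d(x,y) > i  <=>  no walk of length <= i joins x,y. *)
Definition dist_gt (T : finType) (e : rel T) (i : nat) (x y : T) : bool :=
  ~~ within e i x y.

Definition packing_coloring (T : finType) (e : rel T) (k : nat) (c : T -> nat) :=
  (forall x, 1 <= c x <= k) /\
  (forall x y, x != y -> c x = c y -> dist_gt e (c x) x y).

Definition packing_chromatic_ge (T : finType) (e : rel T) (m : nat) :=
  forall k c, packing_coloring e k c -> m <= k.

Definition cycle_adj (n : nat) (i j : 'I_n) : bool :=
  (i.+1 %% n == j) || (j.+1 %% n == i).

Definition cycle_dist (n : nat) (i j : 'I_n) : nat :=
  minn ((j + n - i) %% n) ((i + n - j) %% n).

(* H: vertices inl i (cycle vertices), inr false (leaf at u), inr true (leaf at v). *)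
Definition H_adj (n : nat) (u v : 'I_n) (x y : 'I_n + bool) : bool :=
  match x, y with
  | inl i, inl j => cycle_adj i j
  | inl i, inr b => i == (if b then v else u)
  | inr b, inl i => i == (if b then v else u)
  | inr _, inr _ => false
  end.

(* Main.v *)
Require Import Defs.
From mathcomp Require Import all_boot.
From mathcomp Require Import zify.

Definition Vx (n : nat) (Hn : 0 < n) (m : nat) : 'I_n + bool :=
  inl (Ordinal (ltn_pmod m Hn)).
Arguments Vx {n}.

Lemma Vx_eq n (Hn : 0 < n) a b : (Vx Hn a == Vx Hn b) = (a %% n == b %% n).
Proof.
apply/eqP/eqP => [h | h].
  by move: (congr1 (fun x => if x is inl i then val i else 0) h).
by congr inl; apply: val_inj.
Qed.

Lemma VxE n (Hn : 0 < n) m (i : 'I_n) : m %% n = i -> Vx Hn m = inl i.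
Proof. by move=> h; congr inl; apply: val_inj. Qed.

Lemma adj_fw n (u v : 'I_n) (Hn : 0 < n) m : H_adj u v (Vx Hn m) (Vx Hn m.+1).
Proof.
rewrite /= /cycle_adj /=; apply/orP; left; apply/eqP.
by rewrite -[(m %% n).+1]addn1 modnDml addn1.
Qed.

Lemma adj_bw n (u v : 'I_n) (Hn : 0 < n) m : H_adj u v (Vx Hn m.+1) (Vx Hn m).
Proof.
rewrite /= /cycle_adj /=; apply/orP; right; apply/eqP.
by rewrite -[(m %% n).+1]addn1 modnDml addn1.
Qed.

Lemma within_step (T : finType) (e : rel T) m x z y :
  within e m x z -> e z y -> within e m.+1 x y.
Proof. by move=> h1 h2 /=; apply/orP; right; apply/existsP; exists z; rewrite h1 h2. Qed.

Lemma within_mono (T : finType) (e : rel T) m m' x y :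
  m <= m' -> within e m x y -> within e m' x y.
Proof.
elim: m' => [|m' IH]; first by rewrite leqn0 => /eqP ->.
rewrite leq_eqVlt => /orP [/eqP -> //|] h w /=.
by rewrite (IH h w).
Qed.

Lemma walk_fw n (u v : 'I_n) (Hn : 0 < n) j m :
  within (H_adj u v) j (Vx Hn m) (Vx Hn (m + j)).
Proof.
elim: j m => [|j IH] m; first by rewrite addn0 /= eqxx.
rewrite addnS; apply: within_step (IH m) _; exact: adj_fw.
Qed.

Lemma walk_bw n (u v : 'I_n) (Hn : 0 < n) j m :
  within (H_adj u v) j (Vx Hn (m + j)) (Vx Hn m).
Proof.
elim: j m => [|j IH] m; first by rewrite addn0 /= eqxx.
apply: (@within_step _ _ j _ (Vx Hn m.+1)); last exact: adj_bw.
rewrite -addSnnS; exact: IH.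
Qed.

Lemma Vne n (Hn : 0 < n) m j : 0 < j < n -> Vx Hn (m + j) != Vx Hn m.
Proof.
move=> /andP [h1 h2].
rewrite Vx_eq -{2}(addn0 m) eqn_modDl mod0n modn_small //.
by rewrite -lt0n.
Qed.

Theorem mainTheorem9 (n : nat) (u v : 'I_n) (k : nat) :
  4 <= n -> cycle_dist u v = 2 * k + 1 ->
  packing_chromatic_ge (@H_adj n u v) 4.
Proof.
move=> n4 hd K c [Hr Hc].
rewrite leqNgt; apply/negP => hK.
have Hn : 0 < n by lia.
set e := H_adj u v.
have range : forall x, 1 <= c x <= 3.
  move=> x; have := Hr x; lia.
have sep : forall x y j, x != y -> within e j x y -> j <= c x -> c x <> c y.
  move=> x y j nxy w hj exy; have := Hc x y nxy exy.
  by rewrite /dist_gt (@within_mono _ _ _ _ _ _ hj w).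
have fw : forall a b, a < b < a + n -> b - a <= c (Vx Hn a) ->
    c (Vx Hn a) <> c (Vx Hn b).
  move=> a b hab; case: (exist (fun j => b - a = j) _ erefl) => j hj; rewrite hj.
  have eb : b = a + j by lia. rewrite eb; apply: sep; last exact: walk_fw.
  rewrite eq_sym; apply: Vne; lia.
have bw : forall a b, a < b < a + n -> b - a <= c (Vx Hn b) ->
    c (Vx Hn b) <> c (Vx Hn a).
  move=> a b hab; case: (exist (fun j => b - a = j) _ erefl) => j hj; rewrite hj.
  have eb : b = a + j by lia. rewrite eb; apply: sep; last exact: walk_bw.
  apply: Vne; lia.
have fwj : forall a j, 0 < j < n -> j <= c (Vx Hn a) ->
    c (Vx Hn a) <> c (Vx Hn (a + j)).
  move=> a j hj; have := fw a (a + j) ltac:(lia); by rewrite addKn.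
have bwj : forall a j, 0 < j < n -> j <= c (Vx Hn (a + j)) ->
    c (Vx Hn (a + j)) <> c (Vx Hn a).
  move=> a j hj; have := bw a (a + j) ltac:(lia); by rewrite addKn.
have KeyA0 : forall m, c (Vx Hn (m + 2)) <> 1 -> c (Vx Hn (m + 3)) <> 1 -> False.
  move=> m; rewrite addn2 addn3 => h2 h3.
  have r0 := range (Vx Hn m).
  have r1 := range (Vx Hn m.+1).
  have r2 := range (Vx Hn m.+2).
  have r3 := range (Vx Hn m.+3).
  have r4 := range (Vx Hn m.+4).
  have r5 := range (Vx Hn m.+4.+1).
  have f1 := fwj m.+2 1 ltac:(lia) ltac:(lia). rewrite addn1 in f1.
  have : c (Vx Hn m.+2) = 2 \/ c (Vx Hn m.+2) = 3 by lia.
  case=> h.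
  - have f2 := fwj m.+1 1 ltac:(lia) ltac:(lia). rewrite addn1 in f2.
    have f3 := bwj m.+1 2 ltac:(lia). rewrite addn2 in f3.
    have e3 : c (Vx Hn m.+3) = 3 by lia.
    have e1 : c (Vx Hn m.+1) = 1 by have := f3 ltac:(lia); lia.
    have f4 := fwj m 1 ltac:(lia) ltac:(lia). rewrite addn1 in f4.
    have f5 := fwj m 2 ltac:(lia). rewrite addn2 in f5.
    have f6 := fwj m 3 ltac:(lia). rewrite addn3 in f6.
    have e0 : 2 <= c (Vx Hn m) by lia.
    have f5' := f5 e0.
    have e0' : 3 <= c (Vx Hn m) by lia.
    have f6' := f6 e0'. lia.
  - have f2 := fwj m.+3 1 ltac:(lia) ltac:(lia). rewrite addn1 in f2.
    have f3 := fwj m.+2 2 ltac:(lia) ltac:(lia). rewrite addn2 in f3.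
    have e3 : c (Vx Hn m.+3) = 2 by lia.
    have e4 : c (Vx Hn m.+4) = 1 by lia.
    have f4 := bwj m.+4 1 ltac:(lia). rewrite addn1 in f4.
    have f5 := bwj m.+3 2 ltac:(lia). rewrite addn2 in f5.
    have f6 := bwj m.+2 3 ltac:(lia). rewrite addn3 in f6.
    have e0 : 1 <= c (Vx Hn m.+4.+1) by lia.
    have f4' := f4 e0.
    have e0' : 2 <= c (Vx Hn m.+4.+1) by lia.
    have f5' := f5 e0'.
    have e0'' : 3 <= c (Vx Hn m.+4.+1) by lia.
    have f6' := f6 e0''. lia.
have Fper : forall m, c (Vx Hn (m + n)) = c (Vx Hn m).
  by move=> m; congr c; apply/eqP; rewrite Vx_eq modnDr.
have KeyA : forall i, c (Vx Hn i) <> 1 -> c (Vx Hn i.+1) <> 1 -> False.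
  move=> i; have := KeyA0 (i + n - 2).
  have -> : i + n - 2 + 2 = i + n by lia.
  have -> : i + n - 2 + 3 = i.+1 + n by lia.
  by rewrite !Fper.
have Alt : forall i, (c (Vx Hn i.+1) == 1) = (c (Vx Hn i) != 1).
  move=> i; case: (eqVneq (c (Vx Hn i)) 1) => h /=.
    apply/eqP => h'; have := fw i i.+1; lia.
  case: (eqVneq (c (Vx Hn i.+1)) 1) => // h'; exfalso.
  by apply: (KeyA i); apply/eqP.
have AltJ : forall j m, (c (Vx Hn (m + j)) == 1) = (c (Vx Hn m) == 1) (+) odd j.
  elim=> [|j IH] m; first by rewrite addn0 addbF.
  by rewrite addnS Alt IH /= addbN.
have KeyB : forall (w : 'I_n) (b : bool), w = (if b then v else u) ->
    c (inl w) <> 1.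
  move=> w b hw h.
  pose a := w + n - 1.
  have ea : Vx Hn a.+1 = inl w.
    apply: VxE; have -> : a.+1 = w + n by rewrite /a; lia.
    by rewrite modnDr modn_small.
  have L1 : within e 1 (inr b) (inl w).
    apply: (@within_step _ _ 0 _ (inr b)); first by rewrite /= eqxx.
    by rewrite /e /= hw eqxx.
  have La : within e 2 (inr b) (Vx Hn a).
    apply: within_step L1 _; rewrite -ea; exact: adj_bw.
  have Lb : within e 2 (inr b) (Vx Hn a.+2).
    apply: within_step L1 _; rewrite -ea; exact: adj_fw.
  have rb := range (inr b).
  have r0 := range (Vx Hn a).
  have r2 := range (Vx Hn a.+2).
  have h' : c (Vx Hn a.+1) = 1 by rewrite ea.
  have L1' : within e 1 (inr b) (Vx Hn a.+1) by rewrite ea.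
  have s1 := sep (inr b) (Vx Hn a.+1) 1 isT L1' ltac:(lia).
  have g1 := fwj a 1 ltac:(lia) ltac:(lia). rewrite addn1 in g1.
  have g2 := fwj a.+1 1 ltac:(lia). rewrite addn1 in g2.
  have g2' := g2 ltac:(lia).
  have g3 := fwj a 2 ltac:(lia) ltac:(lia). rewrite addn2 in g3.
  have s2 := sep (inr b) (Vx Hn a) 2 isT La ltac:(lia).
  have s3 := sep (inr b) (Vx Hn a.+2) 2 isT Lb ltac:(lia).
  lia.
have Bu := KeyB u false erefl.
have Bv := KeyB v true erefl.
have Vu : forall w : 'I_n, Vx Hn w = inl w.
  by move=> w; apply: VxE; rewrite modn_small.
have hodd : odd (2 * k + 1) by rewrite addn1 /= oddM.
move: hd; rewrite /cycle_dist /minn; case: ifP => _ hd; rewrite -hd in hodd.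
- have := AltJ ((v + n - u) %% n) u.
  rewrite hodd Vu (@VxE n Hn _ v); last first.
    rewrite modnDmr; have -> : u + (v + n - u) = v + n by have := ltn_ord u; lia.
    by rewrite modnDr modn_small.
  move/eqP: Bu => /negbTE ->; move/eqP: Bv => /negbTE ->; done.
- have := AltJ ((u + n - v) %% n) v.
  rewrite hodd Vu (@VxE n Hn _ u); last first.
    rewrite modnDmr; have -> : v + (u + n - v) = u + n by have := ltn_ord v; lia.
    by rewrite modnDr modn_small.
  move/eqP: Bu => /negbTE ->; move/eqP: Bv => /negbTE ->; done.
Qed.
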